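(* For every nonnegative integer $n$, \[\sum_{r=0}^n\mathcal{K}_{n;r}(z;q)\Phi_r(1;z;q)=\Phi_n(1;z;q)\qquad\text{and}\qquad\sum_{r=0}^n\mathcal{K}_{n;r}(z/q;q)\Phi_r(u;z;q)=\Phi_n(uz;z;q).\]
   Context: $(a;q)_n=\prod_{j=0}^{n-1}(1-aq^j)$ for $n\ge0$ and $1/(q;q)_n=0$ for $n<0$; $(a,b;q)_n=(a;q)_n(b;q)_n$. For $n,r\in\mathbb{Z}$: \[\Phi_n(u;z;q):=\frac{1-uz-(1-u)zq^n}{(q;q)_n(z;q)_{n+1}},\qquad \mathcal{K}_{n;r}(z;q):=\frac{z^rq^{r^2}}{(q;q)_{n-r}}.\] (Note $\Phi_n(1;z;q)=1/(q,zq;q)_n$.) *)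

(* Defs.v *)
From HB Require Import structures.
From mathcomp Require Import all_boot all_order all_algebra.
Set Implicit Arguments. Unset Strict Implicit. Unset Printing Implicit Defensive.
Import Order.TTheory GRing.Theory Num.Theory.
Local Open Scope ring_scope.

Definition qpoch (F : fieldType) (a q : F) (n : nat) : F :=
  \prod_(j < n) (1 - a * q ^+ j).

Definition Phi (F : fieldType) (n : nat) (u z q : F) : F :=
  (1 - u * z - (1 - u) * z * q ^+ n) / (qpoch q q n * qpoch z q n.+1).

(* K_{n;r}(z;q) = z^r q^{r^2} / (q;q)_{n-r}, used only for 0 <= r <= n *)
Definition Kc (F : fieldType) (n r : nat) (z q : F) : F :=
  z ^+ r * q ^+ (r * r) / qpoch q q (n - r).

(* Main.v *)
Require Import Defs.
From HB Require Import structures.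
From mathcomp Require Import all_boot all_order all_algebra.
From mathcomp Require Import ring zify.
Import GRing.Theory.
Local Open Scope ring_scope.

Lemma nat_split n i : (i < n)%N -> exists k, n = (i + k.+1)%N.
Proof. by move=> h; exists (n - i.+1)%N; lia. Qed.
Lemma nl1 i k : (k <= (i + k.+1).+1)%N. Proof. lia. Qed.
Lemma nl2 i k : (i <= (i + k.+1).+1)%N. Proof. lia. Qed.
Lemma nl3 i k : (k < (i + k.+1).+1)%N. Proof. lia. Qed.
Lemma nl4 i k : (i < (i + k.+1).+1)%N. Proof. lia. Qed.
Lemma nl5 i k : (i <= i + k.+1)%N. Proof. lia. Qed.
Lemma ne1 i k : ((i + k.+1).+1 - i.+1 = k.+1)%N. Proof. lia. Qed.
Lemma ne2 i k : (i + k.+1 - i.+1 = k)%N. Proof. lia. Qed.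
Lemma ne3 i k : (i + k.+1 - i = k.+1)%N. Proof. lia. Qed.
Lemma nsq i : (i.+1 * i.+1 = i * i + i + i + 1)%N. Proof. nia. Qed.

Section Aux.
Variable F : fieldType.
Implicit Types a q w : F.

Lemma q0 a q : qpoch a q 0 = 1.
Proof. by rewrite /qpoch big_ord0. Qed.

Lemma qS a q n : qpoch a q n.+1 = qpoch a q n * (1 - a * q ^+ n).
Proof. by rewrite /qpoch big_ord_recr. Qed.

Lemma qSl a q n : qpoch a q n.+1 = (1 - a) * qpoch (a * q) q n.
Proof.
rewrite /qpoch big_ord_recl expr0 mulr1; congr (_ * _).
by apply: eq_bigr => i _; rewrite /= exprS mulrA.
Qed.

Lemma qadd a q m p : qpoch a q (m + p) = qpoch a q m * qpoch (a * q ^+ m) q p.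
Proof.
elim: p => [|p IH]; first by rewrite addn0 q0 mulr1.
rewrite addnS !qS IH exprD; ring.
Qed.

Lemma qnz_le a q n m : qpoch a q n != 0 -> (m <= n)%N -> qpoch a q m != 0.
Proof.
move=> h hmn; move: h; rewrite -(subnKC hmn) qadd mulf_eq0 negb_or.
by case/andP.
Qed.
Arguments qnz_le {a q n m}.

Lemma qnz_fac a q n j : qpoch a q n != 0 -> (j < n)%N -> 1 - a * q ^+ j != 0.
Proof.
move=> h hj; have := qnz_le h hj; rewrite qS mulf_eq0 negb_or.
by case/andP.
Qed.

Arguments qnz_fac {a q n j}.

Definition aT q w n r :=
  w ^+ r * q ^+ (r * r) / (qpoch q q (n - r) * qpoch q q r * qpoch (w * q) q r).

Lemma Tlem q n : forall w, qpoch q q n != 0 -> qpoch (w * q) q n != 0 ->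
  \sum_(0 <= r < n.+1) aT q w n r = (qpoch q q n * qpoch (w * q) q n)^-1.
Proof.
elim: n => [|n IH] w hP hW.
  by rewrite big_nat1 /aT subnn muln0 !q0 !expr0 !mulr1 mul1r invr1.
have hPn : qpoch q q n != 0 by apply: (qnz_le hP).
have hc : 1 - q * q ^+ n != 0 by apply: (qnz_fac hP).
have hWn : qpoch (w * q) q n != 0 by apply: (qnz_le hW).
have hwq : 1 - w * q != 0.
  by have := qnz_fac hW (ltn0Sn n); rewrite expr0 mulr1.
have hwqn : 1 - w * q * q ^+ n != 0 by apply: (qnz_fac hW).
have hWW : qpoch (w * q * q) q n != 0.
  by move: hW; rewrite qSl mulf_eq0 negb_or => /andP[].
have IH1 := IH w hPn hWn.
have IH2 := IH (w * q) hPn hWW.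
have key : (1 - q * q ^+ n) * \sum_(0 <= r < n.+2) aT q w n.+1 r =
   \sum_(0 <= r < n.+1) aT q w n r +
   (w * q ^+ n.+1 / (1 - w * q)) * \sum_(0 <= r < n.+1) aT q (w * q) n r.
  rewrite (@big_nat_recl _ _ _ n.+1 0 (aT q w n.+1)) //.
  rewrite (@big_nat_recr _ _ _ n 0 (fun i => aT q w n.+1 i.+1)) //=.
  rewrite (@big_nat_recl _ _ _ n 0 (aT q w n)) // (@big_nat_recr _ _ _ n 0 (aT q (w * q) n)) //=.
  rewrite !mulrDr !mulr_sumr.
  have h0 : (1 - q * q ^+ n) * aT q w n.+1 0 = aT q w n 0.
    rewrite /aT !subn0 !q0 qS !expr0 !mul1r !mulr1; field.
    by rewrite hPn hc.
  have hn : (1 - q * q ^+ n) * aT q w n.+1 n.+1 =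
      w * q ^+ n.+1 / (1 - w * q) * aT q (w * q) n n.
    rewrite /aT !subnn !q0 !mul1r (qS q q n) (qSl (w * q) q n).
    rewrite nsq.
    rewrite !exprD expr1 !exprS exprMn.
    move: hc; move: (q ^+ (n * n)) (q ^+ n) => A B hcB; field.
    by rewrite hPn hcB hwq hWW.
  have hm : \sum_(0 <= i < n) (1 - q * q ^+ n) * aT q w n.+1 i.+1 =
      \sum_(0 <= i < n) aT q w n i.+1 +
      \sum_(0 <= i < n) w * q ^+ n.+1 / (1 - w * q) * aT q (w * q) n i.
    rewrite -big_split /=; apply: eq_big_nat => i /andP[_ hi].
    have [k hk] := nat_split _ _ hi; subst n.
    have hPk : qpoch q q k != 0 by apply: (qnz_le hP); apply: nl1.
    have hPi : qpoch q q i != 0 by apply: (qnz_le hP); apply: nl2.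
    have hck : 1 - q * q ^+ k != 0 by apply: (qnz_fac hP); apply: nl3.
    have hci : 1 - q * q ^+ i != 0 by apply: (qnz_fac hP); apply: nl4.
    have hWi : qpoch (w * q * q) q i != 0 by apply: (qnz_le hWW); apply: nl5.
    rewrite /aT ne1 ne2 ne3 nsq.
    rewrite (qSl (w * q) q i) (qS q q k) (qS q q i).
    rewrite !exprD expr1 !exprS ?exprD ?exprS exprMn.
    move: hck hci; move: (q ^+ (i * i)) (q ^+ i) (q ^+ k) => A B C hck hci; field.
    by rewrite hPk hPi hck hci hwq hWi.
  rewrite h0 hn hm; ring.
apply: (mulfI hc).
rewrite key IH1 IH2 (qS q q n) (qS (w * q) q n).
have E : qpoch (w * q) q n = (1 - w * q) * qpoch (w * q * q) q n / (1 - w * q * q ^+ n).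
  by rewrite -qSl qS mulfK.
rewrite E exprS.
move: hc hwqn; move: (q ^+ n) => B hc hwqn; field.
by rewrite hPn hc hwq hwqn hWW.
Qed.

End Aux.
Arguments q0 {F}. Arguments qS {F}. Arguments qSl {F}. Arguments qnz_le {F a q n m}. Arguments qnz_fac {F a q n j}. Arguments aT {F}. Arguments Tlem {F}.

Theorem lemma3p3 (F : fieldType) (n : nat) (u z q : F)
  (hq : q != 0) (hqq : qpoch q q n != 0) (hzq : qpoch z q n.+1 != 0) :
  \sum_(0 <= r < n.+1) Kc n r z q * Phi r 1 z q = Phi n 1 z q /\
  \sum_(0 <= r < n.+1) Kc n r (z / q) q * Phi r u z q = Phi n (u * z) z q.
Proof.
have hzq1 : 1 - z != 0 by have := qnz_fac hzq (ltn0Sn n); rewrite expr0 mulr1.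
have hZ : qpoch (z * q) q n != 0 by move: hzq; rewrite qSl mulf_eq0 negb_or => /andP[].
split.
  have -> : \sum_(0 <= r < n.+1) Kc n r z q * Phi r 1 z q =
            \sum_(0 <= r < n.+1) aT q z n r.
    apply: eq_big_nat => r /andP[_ hr].
    have hPr : qpoch q q r != 0 by apply: (qnz_le hqq).
    have hPnr : qpoch q q (n - r) != 0 by apply: (qnz_le hqq); apply: leq_subr.
    have hZr : qpoch (z * q) q r != 0 by apply: (qnz_le hZ).
    rewrite /Kc /Phi /aT (qSl z q r).
    move: (q ^+ r) (q ^+ (r * r)) (z ^+ r) => A B C; field.
    by rewrite hPr hPnr hZr hzq1 ?oner_neq0 ?andbT.
  rewrite Tlem // /Phi (qSl z q n).
  move: (q ^+ n) => A; field.
  by rewrite hqq hZ hzq1 ?oner_neq0 ?andbT.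
move: hqq hzq hzq1 hZ; case: n => [|m] hqq hzq hzq1 hZ.
  rewrite big_nat1 /Kc /Phi subnn muln0 !expr0 !q0 (qS z q 0) q0 expr0.
  field. by rewrite hzq1 ?oner_neq0 ?andbT.
have hq' : z / q * q = z := divfK hq z.
have hzq2 : 1 - z * q != 0 by have := qnz_fac hzq (isT : (1 < m.+2)%N); rewrite expr1.
have hD : qpoch (z * q * q) q m != 0 by move: hZ; rewrite qSl mulf_eq0 negb_or => /andP[].
have hzN : qpoch z q m.+1 != 0 by apply: (qnz_le hzq).
have hzNf : 1 - z * q ^+ m.+1 != 0 by apply: (qnz_fac hzq).
have hPm : qpoch q q m != 0 by apply: (qnz_le hqq).
have hcm : 1 - q * q ^+ m != 0 by apply: (qnz_fac hqq).
pose b := fun r => Kc m.+1 r (z / q) q * z * (1 - q ^+ r) / (qpoch q q r * qpoch z q r.+1).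
have -> : \sum_(0 <= r < m.+2) Kc m.+1 r (z / q) q * Phi r u z q =
          \sum_(0 <= r < m.+2) (aT q (z / q) m.+1 r - u * b r).
  apply: eq_big_nat => r /andP[_ hr].
  have hPr : qpoch q q r != 0 by apply: (qnz_le hqq).
  have hPnr : qpoch q q (m.+1 - r) != 0 by apply: (qnz_le hqq); apply: leq_subr.
  have hzr : qpoch z q r != 0 by apply: (qnz_le hzq); apply: ltnW.
  have hzrf : 1 - z * q ^+ r != 0 by apply: (qnz_fac hzq).
  have hqr : q ^+ r != 0 by apply: expf_neq0.
  rewrite /b /Kc /aT /Phi hq' (qS z q r).
  move: hzrf hqr; move: ((z / q) ^+ r) (q ^+ (r * r)) (q ^+ r) => X Y Q hzrf hqr.
  field. by rewrite hPr hPnr hzr hzrf ?oner_neq0 ?andbT.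
rewrite sumrB -mulr_sumr (Tlem _ _ (z / q) hqq); last by rewrite hq' ?oner_neq0 ?andbT.
rewrite hq' big_nat_recl //.
have hb0 : b 0%N = 0 by rewrite /b expr0 subrr mulr0 mul0r.
have hbs : \sum_(0 <= s < m.+1) b s.+1 =
    z * z / ((1 - z) * (1 - z * q)) * \sum_(0 <= s < m.+1) aT q (z * q) m s.
  rewrite mulr_sumr; apply: eq_big_nat => s /andP[_ hs].
  have hPs : qpoch q q s != 0 by apply: (qnz_le hqq); apply: ltnW.
  have hcs : 1 - q * q ^+ s != 0 by apply: (qnz_fac hqq).
  have hPms : qpoch q q (m - s) != 0 by apply: (qnz_le hqq); apply: (leq_trans (leq_subr s m)).
  have hDs : qpoch (z * q * q) q s != 0 by apply: (qnz_le hD).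
  have hqs : q ^+ s != 0 by apply: expf_neq0.
  rewrite /b /Kc /aT subSS (qS q q s) (qSl z q s.+1) (qSl (z * q) q s).
  rewrite expr_div_n nsq !exprD expr1 (exprS q s) (exprS z s) exprMn.
  move: hcs hqs; move: (q ^+ s) (q ^+ (s * s)) (z ^+ s) => A B C hcs hqs.
  field. by rewrite hPs hcs hPms hDs hqs hzq1 hzq2 ?oner_neq0 ?andbT.
rewrite hb0 add0r hbs Tlem //.
have ED : qpoch (z * q * q) q m = qpoch z q m.+1 * (1 - z * q ^+ m.+1) / ((1 - z) * (1 - z * q)).
  rewrite -qS (qSl z q m.+1) (qSl (z * q) q m); field.
  by rewrite hzq1 hzq2 ?oner_neq0 ?andbT.
rewrite ED /Phi (qS q q m) (qS z q m.+1) (exprS q m).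
move: hzNf hcm; rewrite (exprS q m); move: (q ^+ m) => Q hzNf hcm.
field. by rewrite hPm hcm hzN hzNf hzq1 hzq2 ?oner_neq0 ?andbT.
Qed.
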